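(* Let $P$ be a poset which admits a strictly isotone map $g:P\to P\uparrow x=\{y\in P\mid y\ge x\}$ for some non-minimal element $x\in P$. Then there exists no strictly isotone map $f:\mathrm{id}(P)\to P$. In particular, if $P$ is the lattice of all subsets of an infinite set, or the lattice of all equivalence relations on an infinite set, there is no strictly isotone map $\mathrm{id}(P)\to P$.
   Context: For a poset $P$, an ideal of $P$ is an upward directed downset of $P$ (a downset $d$ satisfies $x\le y\in d\Rightarrow x\in d$; upward directed means every two elements of the set have a common upper bound in the set). $\mathrm{id}(P)$ denotes the set of nonempty ideals of $P$, ordered by inclusion. A map $f:P\to Q$ of posets is strictly isotone if $x<y$ implies $f(x)<f(y)$. *)

(* Defs.v *)
From Stdlib Require Import Arith.

Definition is_poset {T : Type} (le : T -> T -> Prop) : Prop :=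
  (forall x, le x x) /\
  (forall x y, le x y -> le y x -> x = y) /\
  (forall x y z, le x y -> le y z -> le x z).

Definition lt_of {T : Type} (le : T -> T -> Prop) (x y : T) : Prop :=
  le x y /\ x <> y.

Definition strictly_isotone {A B : Type} (leA : A -> A -> Prop)
  (leB : B -> B -> Prop) (f : A -> B) : Prop :=
  forall a b, lt_of leA a b -> lt_of leB (f a) (f b).

Definition is_ideal {T : Type} (le : T -> T -> Prop) (d : T -> Prop) : Prop :=
  (exists x, d x) /\
  (forall x y, le x y -> d y -> d x) /\
  (forall x y, d x -> d y -> exists z, d z /\ le x z /\ le y z).

Definition ideal {T : Type} (le : T -> T -> Prop) : Type :=
  { d : T -> Prop | is_ideal le d }.

Definition ideal_le {T : Type} (le : T -> T -> Prop) (d e : ideal le) : Prop :=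
  forall x, proj1_sig d x -> proj1_sig e x.

Definition upset {T : Type} (le : T -> T -> Prop) (x : T) : Type :=
  { y : T | le x y }.

Definition upset_le {T : Type} (le : T -> T -> Prop) (x : T)
  (a b : upset le x) : Prop := le (proj1_sig a) (proj1_sig b).

Definition infinite (X : Type) : Prop :=
  ~ exists (n : nat) (h : X -> nat),
      (forall x, h x < n) /\ (forall x y, h x = h y -> x = y).

Definition subset_le (X : Type) (A B : X -> Prop) : Prop :=
  forall x, A x -> B x.

Definition is_equivalence {X : Type} (R : X -> X -> Prop) : Prop :=
  (forall x, R x x) /\ (forall x y, R x y -> R y x) /\
  (forall x y z, R x y -> R y z -> R x z).

Definition eqrel (X : Type) : Type := { R : X -> X -> Prop | is_equivalence R }.

Definition eqrel_le (X : Type) (R S : eqrel X) : Prop :=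
  forall x y, proj1_sig R x y -> proj1_sig S x y.

(* Main.v *)
Require Import Defs.
From Stdlib Require Import Arith Classical ClassicalEpsilon FunctionalExtensionality PropExtensionality ProofIrrelevance List Lia.

Section Tower.
Variables (T:Type) (le: T->T->Prop) (Hp: is_poset le) (k: ideal le -> T)
  (Hk: strictly_isotone (ideal_le le) le k).

Let refl : forall x, le x x. Proof. apply Hp. Qed.
Let antis : forall x y, le x y -> le y x -> x = y. Proof. apply Hp. Qed.
Let trans : forall x y z, le x y -> le y z -> le x z. Proof. apply Hp. Qed.

Lemma k_mono : forall a b, ideal_le le a b -> le (k a) (k b).
Proof. intros a b H. destruct (classic (a=b)). subst; apply refl. apply Hk; split; auto. Qed.

Lemma down_ideal (p:T) : is_ideal le (fun q => le q p).
Proof. split; [exists p; apply refl|split].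
- intros x y H1 H2. eauto.
- intros x y H1 H2. exists p. auto.
Qed.

Definition down (p:T) : ideal le := exist _ (fun q => le q p) (down_ideal p).
Definition F (I : ideal le) := down (k I).
Definition Sgood (I : ideal le) := forall p, proj1_sig I p -> lt_of le p (k I).

Definition closed (A: ideal le -> Prop) (I0: ideal le) :=
  A I0 /\ (forall I, A I -> A (F I)) /\
  (forall (C: ideal le -> Prop) (U : ideal le), (forall I, C I -> A I) -> (exists I, C I) ->
     (forall p, proj1_sig U p <-> exists I, C I /\ proj1_sig I p) -> A U).

Variable I0 : ideal le.
Hypothesis H0 : Sgood I0.
Definition Tw I := forall A, closed A I0 -> A I.

Lemma Tw_closed : closed Tw I0.
Proof.
  split; [|split].
  - intros A HA; apply HA.
  - intros I HI A HA. apply HA. apply HI, HA.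
  - intros C U HC Hne HU A HA. pose proof HA as HA'. destruct HA as (_&_&HA). apply (HA C U); auto.
    intros I HI. exact (HC I HI A HA').
Qed.

Lemma Tw_ind (A : ideal le -> Prop) : A I0 -> (forall I, Tw I -> A I -> A (F I)) ->
  (forall (C: ideal le -> Prop) (U : ideal le), (forall I, C I -> Tw I /\ A I) -> (exists I, C I) ->
     (forall p, proj1_sig U p <-> exists I, C I /\ proj1_sig I p) -> A U) ->
  forall I, Tw I -> A I.
Proof.
  intros h0 h1 h2 I HI.
  assert (H : closed (fun I => Tw I /\ A I) I0).
  { destruct Tw_closed as (c0&c1&c2). split; [|split].
    - split; auto.
    - intros J [HJ HJ']. split; auto.
    - intros C U HC Hne HU. split.
      + apply (c2 C U); auto. intros J HJ; apply HC; auto.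
      + apply (h2 C U); auto. }
  apply (HI _ H).
Qed.

Lemma S_Tw : forall I, Tw I -> Sgood I.
Proof.
  apply Tw_ind.
  - exact H0.
  - intros I _ HS p Hp'. simpl in Hp'.
    assert (Hlt : lt_of le (k I) (k (F I))).
    { apply Hk. split.
      - intros q Hq. simpl. apply HS; auto.
      - intros E. assert (Hin : proj1_sig (F I) (k I)) by (simpl; apply refl).
        rewrite <- E in Hin. destruct (HS _ Hin) as [_ N]. apply N; reflexivity. }
    destruct Hlt as [L N]. split; eauto.
    intros E; subst p. apply N. apply antis; auto.
  - intros C U HC [I0' HI0'] HU p Hpu. apply HU in Hpu. destruct Hpu as [I [HI HpI]].
    destruct (HC I HI) as [_ HS]. destruct (HS p HpI) as [L N].
    assert (Hm : le (k I) (k U)).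
    { apply k_mono. intros q Hq. apply HU. exists I; auto. }
    split; eauto. intros E; subst p. apply N, antis; auto.
Qed.

Lemma infl : forall I, Tw I -> ideal_le le I (F I).
Proof. intros I HI p Hp'. simpl. apply (S_Tw I HI p Hp'). Qed.

Lemma F_mono : forall a b, ideal_le le a b -> ideal_le le (F a) (F b).
Proof. intros a b H q Hq. simpl in *. eapply trans; [exact Hq|]. apply k_mono; auto. Qed.

Lemma I0_min : forall I, Tw I -> ideal_le le I0 I.
Proof.
  apply Tw_ind.
  - intros p h; exact h.
  - intros I HI H p h. apply infl; auto.
  - intros C U HC [J HJ] HU p h. apply HU. exists J. split; auto. apply (HC J HJ); auto.
Qed.

Definition ext c := forall x, Tw x -> ideal_le le x c -> ~ ideal_le le c x -> ideal_le le (F x) c.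

Lemma M : forall c, Tw c -> ext c -> forall x, Tw x -> ideal_le le x c \/ ideal_le le (F c) x.
Proof.
  intros c Hc He. apply Tw_ind.
  - left. apply I0_min; auto.
  - intros x Hx [H|H].
    + destruct (classic (ideal_le le c x)) as [H'|H'].
      * right. apply F_mono; auto.
      * left. apply He; auto.
    + right. intros p h. apply infl; auto.
  - intros C U HC Hne HU.
    destruct (classic (exists I, C I /\ ~ ideal_le le I c)) as [[I [HI HnI]]|Hn].
    + right. destruct (HC I HI) as [_ [h|h]]; [contradiction|].
      intros p hp. apply HU. exists I; auto.
    + left. intros p hp. apply HU in hp. destruct hp as [I [HI hI]].
      destruct (classic (ideal_le le I c)) as [h|h]; [auto|].
      exfalso; apply Hn; eauto.
Qed.

Lemma all_ext : forall c, Tw c -> ext c.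
Proof.
  apply Tw_ind.
  - intros x Hx H1 H2. exfalso. apply H2. apply I0_min; auto.
  - intros c Hc He x Hx H1 H2.
    destruct (M c Hc He x Hx) as [h|h]; [|contradiction].
    apply F_mono; auto.
  - intros C U HC Hne HU x Hx H1 H2.
    destruct (classic (exists J, C J /\ ~ ideal_le le J x)) as [[J [HJ HnJ]]|Hn].
    + destruct (HC J HJ) as [TJ EJ].
      destruct (M J TJ EJ x Hx) as [h|h].
      * intros p hp. apply HU. exists J. split; auto. apply (EJ x Hx h HnJ); auto.
      * exfalso. apply HnJ. intros p hp. apply h. apply infl; auto.
    + exfalso. apply H2. intros p hp. apply HU in hp. destruct hp as [J [HJ hJ]].
      destruct (classic (ideal_le le J x)) as [h|h]; [auto|]. exfalso; apply Hn; eauto.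
Qed.

Lemma chain : forall x y, Tw x -> Tw y -> ideal_le le x y \/ ideal_le le y x.
Proof.
  intros x y Hx Hy. destruct (M y Hy (all_ext y Hy) x Hx) as [h|h]; auto.
  right. intros p hp. apply h. apply infl; auto.
Qed.

Lemma union_ideal : is_ideal le (fun p => exists I, Tw I /\ proj1_sig I p).
Proof.
  split; [|split].
  - destruct (proj2_sig I0) as [[p hp] _]. exists p, I0. split; auto. apply Tw_closed.
  - intros x y hxy [I [HI hI]]. exists I. split; auto.
    destruct (proj2_sig I) as [_ [d _]]. eapply d; eauto.
  - intros x y [I [HI hI]] [J [HJ hJ]].
    destruct (chain I J HI HJ) as [h|h].
    + destruct (proj2_sig J) as [_ [_ d]]. destruct (d x y (h x hI) hJ) as [z [hz [a b]]].
      exists z. split; auto. exists J; auto.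
    + destruct (proj2_sig I) as [_ [_ d]]. destruct (d x y hI (h y hJ)) as [z [hz [a b]]].
      exists z. split; auto. exists I; auto.
Qed.

Theorem tower_contra : False.
Proof.
  set (U := exist _ _ union_ideal : ideal le).
  assert (HU : Tw U).
  { destruct Tw_closed as (_&_&c). apply (c Tw U); auto.
    - exists I0. apply Tw_closed.
    - intros p; simpl; tauto. }
  assert (HF : Tw (F U)) by (apply Tw_closed; auto).
  assert (hin : proj1_sig U (k U)) by (simpl; exists (F U); split; auto; simpl; apply refl).
  destruct (S_Tw U HU _ hin) as [_ N]. apply N; reflexivity.
Qed.
End Tower.

Section Ded.
Variables (X : Type) (Hinf : infinite X) (x0 : X).

Lemma inf_notin : forall L : list X, exists u, ~ In u L.
Proof.
  intros L. apply NNPP. intros Hn. apply Hinf.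
  assert (Hall : forall u, In u L) by (intros u; apply NNPP; intros h; apply Hn; eauto).
  set (P := fun u i => i < length L /\ nth i L x0 = u).
  assert (HP : forall u, exists i, P u i).
  { intros u. destruct (In_nth L u x0 (Hall u)) as [i [h1 h2]]. exists i; split; auto. }
  exists (length L), (fun u => epsilon (inhabits 0) (P u)).
  split.
  - intros u. apply (epsilon_spec (inhabits 0) (P u) (HP u)).
  - intros u v E. destruct (epsilon_spec (inhabits 0) (P u) (HP u)) as [_ h1].
    destruct (epsilon_spec (inhabits 0) (P v) (HP v)) as [_ h2].
    rewrite E in h1. congruence.
Qed.

Definition pick (L : list X) : X := epsilon (inhabits x0) (fun u => ~ In u L).
Lemma pick_spec L : ~ In (pick L) L.
Proof. apply (epsilon_spec (inhabits x0) (fun u => ~ In u L)). apply inf_notin. Qed.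

Fixpoint lst (n : nat) : list X := match n with 0 => nil | S n => pick (lst n) :: lst n end.
Definition nn n := pick (lst n).

Lemma nn_in : forall i j, i < j -> In (nn i) (lst j).
Proof.
  intros i j; induction j; intros h; [lia|]. simpl.
  destruct (Nat.eq_dec i j); [subst; left; reflexivity|]. right; apply IHj; lia.
Qed.

Lemma nn_inj : forall i j, nn i = nn j -> i = j.
Proof.
  intros i j E. destruct (Nat.lt_trichotomy i j) as [h|[h|h]]; auto.
  - exfalso. apply (pick_spec (lst j)). fold (nn j). rewrite <- E. apply nn_in; auto.
  - exfalso. apply (pick_spec (lst i)). fold (nn i). rewrite E. apply nn_in; auto.
Qed.

Definition e (u : X) : X :=
  match excluded_middle_informative (exists i, u = nn i) with
  | left H => nn (S (S (proj1_sig (constructive_indefinite_description _ H))))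
  | right _ => u end.

Lemma e_inj : forall u v, e u = e v -> u = v.
Proof.
  intros u v. unfold e.
  destruct (excluded_middle_informative (exists i, u = nn i)) as [Hu|Hu];
  destruct (excluded_middle_informative (exists i, v = nn i)) as [Hv|Hv].
  - destruct (constructive_indefinite_description _ Hu) as [i hi].
    destruct (constructive_indefinite_description _ Hv) as [j hj]. simpl.
    intros E. apply nn_inj in E. congruence.
  - destruct (constructive_indefinite_description _ Hu) as [i hi]. simpl.
    intros E. exfalso. apply Hv. eauto.
  - destruct (constructive_indefinite_description _ Hv) as [j hj]. simpl.
    intros E. exfalso. apply Hu. eauto.
  - auto.
Qed.

Lemma e_ne : forall u n, n < 2 -> e u <> nn n.
Proof.
  intros u n hn. unfold e.
  destruct (excluded_middle_informative (exists i, u = nn i)) as [Hu|Hu].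
  - destruct (constructive_indefinite_description _ Hu) as [i hi]. simpl.
    intros E. apply nn_inj in E. lia.
  - intros E. apply Hu; eauto.
Qed.
End Ded.

Lemma inf_inh (X : Type) : infinite X -> inhabited X.
Proof.
  intros H. apply NNPP. intros N. apply H. exists 0, (fun _ => 0).
  split; intros x; exfalso; apply N; constructor; auto.
Qed.

Lemma part1 : forall (T : Type) (le : T -> T -> Prop), is_poset le ->
     forall x : T, (exists y, lt_of le y x) ->
     forall g : T -> upset le x, strictly_isotone le (upset_le le x) g ->
     ~ exists f : ideal le -> T, strictly_isotone (ideal_le le) le f.
Proof.
  intros T le Hp x [y [Hyx Nyx]] g Hg [f Hf].
  destruct Hp as (refl&antis&trans).
  set (k := fun I => proj1_sig (g (f I))).
  assert (Hk : strictly_isotone (ideal_le le) le k).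
  { intros a b h. destruct (Hg _ _ (Hf _ _ h)) as [h1 h2]. split; [exact h1|].
    unfold k. intros E. apply h2.
    destruct (g (f a)) as [u pu], (g (f b)) as [v pv]. simpl in E. subst v.
    f_equal. apply proof_irrelevance. }
  apply (tower_contra T le (conj refl (conj antis trans)) k Hk (down T le (conj refl (conj antis trans)) y)).
  intros p hp. simpl in hp.
  assert (hx : le x (k (down T le (conj refl (conj antis trans)) y))) by (unfold k; apply proj2_sig).
  split; eauto. intros E. apply Nyx. apply antis; auto. rewrite E in hp. eauto.
Qed.

Lemma subset_poset X : is_poset (subset_le X).
Proof.
  split; [|split]; unfold subset_le; auto.
  intros A B h1 h2. apply functional_extensionality; intros u.
  apply propositional_extensionality; split; auto.
Qed.

Lemma part2 : forall X : Type, infinite X ->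
     ~ exists f : ideal (subset_le X) -> (X -> Prop),
         strictly_isotone (ideal_le (subset_le X)) (subset_le X) f.
Proof.
  intros X Hinf. destruct (inf_inh X Hinf) as [x0].
  set (n := nn X x0). set (e := e X x0).
  set (xs := fun u => u = n 0).
  assert (Hg : forall A : X -> Prop, subset_le X xs (fun u => u = n 0 \/ exists s, A s /\ u = e s)).
  { intros A u h; left; exact h. }
  apply (part1 _ _ (subset_poset X) xs) with (g := fun A => exist _ _ (Hg A)).
  - exists (fun _ => False). split; [intros u []|].
    intros E. assert (h : xs (n 0)) by reflexivity. rewrite <- E in h; exact h.
  - intros A B [h1 h2]. split.
    + intros u [h|[s [hs hu]]]; [left; auto|right; eauto].
    + intros E. apply h2. apply (f_equal (@proj1_sig _ _)) in E. simpl in E.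
      apply (subset_poset X); auto. intros s hs.
      assert (h : (fun u => u = n 0 \/ exists s, B s /\ u = e s) (e s)) by (right; eauto).
      rewrite <- E in h. destruct h as [h|[s' [hs' hu]]].
      * exfalso. apply (e_ne X Hinf x0 s 0); auto.
      * apply (e_inj X Hinf x0) in hu. subst; auto.
Qed.

Lemma eqrel_poset X : is_poset (eqrel_le X).
Proof.
  split; [|split]; unfold eqrel_le; auto.
  intros [R pR] [S pS] h1 h2. simpl in *.
  assert (E : R = S).
  { apply functional_extensionality; intros u. apply functional_extensionality; intros v.
    apply propositional_extensionality; split; auto. }
  subst S. f_equal. apply proof_irrelevance.
Qed.

Lemma part3 : forall X : Type, infinite X ->
     ~ exists f : ideal (eqrel_le X) -> eqrel X,
         strictly_isotone (ideal_le (eqrel_le X)) (eqrel_le X) f.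
Proof.
  intros X Hinf. destruct (inf_inh X Hinf) as [x0].
  set (n := nn X x0). set (e := e X x0).
  set (a := n 0). set (b := n 1).
  assert (Hab : a <> b) by (intros E; apply (nn_inj X Hinf x0) in E; discriminate).
  assert (ea : forall s, e s <> a) by (intros s; apply (e_ne X Hinf x0 s 0); auto).
  assert (eb : forall s, e s <> b) by (intros s; apply (e_ne X Hinf x0 s 1); auto).
  assert (einj : forall s t, e s = e t -> s = t) by apply (e_inj X Hinf x0).
  set (xr := fun u v : X => u = v \/ (u = a /\ v = b) \/ (u = b /\ v = a)).
  assert (Hxr : is_equivalence xr).
  { unfold xr; split; [|split]; intros; intuition congruence. }
  set (gr := fun (R : eqrel X) (u v : X) =>
        xr u v \/ exists s t, u = e s /\ v = e t /\ proj1_sig R s t).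
  assert (Hgr : forall R, is_equivalence (gr R)).
  { intros [R [r1 [r2 r3]]]. unfold gr, xr; simpl. split; [|split].
    - intros u; left; left; auto.
    - intros u v [h|[s [t [h1 [h2 h3]]]]].
      + left; intuition.
      + right. exists t, s. auto.
    - intros u v w [h|[s [t [h1 [h2 h3]]]]] [h'|[s' [t' [h1' [h2' h3']]]]].
      + left. intuition congruence.
      + destruct h as [h|[[h4 h5]|[h4 h5]]].
        * subst. right; exists s', t'; auto.
        * exfalso; subst v; eapply eb; eauto.
        * exfalso; subst v; eapply ea; eauto.
      + destruct h' as [h|[[h4 h5]|[h4 h5]]].
        * subst. right; exists s, t; auto.
        * exfalso; subst v; eapply ea; eauto.
        * exfalso; subst v; eapply eb; eauto.
      + subst. apply einj in h1'. subst. right. exists s, t'. eauto. }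
  set (xe := exist _ xr Hxr : eqrel X).
  assert (Hg : forall R, eqrel_le X xe (exist _ (gr R) (Hgr R))).
  { intros R u v h. simpl. left; exact h. }
  apply (part1 _ _ (eqrel_poset X) xe) with (g := fun R => exist _ _ (Hg R)).
  - assert (Hd : is_equivalence (fun u v : X => u = v)).
    { split; [|split]; intros; congruence. }
    exists (exist _ _ Hd). split.
    + intros u v h. simpl. left; exact h.
    + intros E. apply (f_equal (@proj1_sig _ _)) in E. simpl in E.
      assert (h : xr a b) by (right; left; auto). rewrite <- E in h. auto.
  - intros R S [h1 h2]. split.
    + intros u v [h|[s [t [ha [hb hc]]]]]; [left; auto|right; exists s, t; auto].
    + intros E. apply h2. apply (f_equal (@proj1_sig _ _)) in E. simpl in E.
      apply (f_equal (@proj1_sig _ _)) in E. simpl in E.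
      apply (eqrel_poset X); auto. intros s t hs.
      assert (h : gr S (e s) (e t)) by (right; exists s, t; auto).
      rewrite <- E in h. destruct h as [h|[s' [t' [ha [hb hc]]]]].
      * destruct h as [h|[[h3 h4]|[h3 h4]]].
        -- apply einj in h. subst. destruct (proj2_sig R) as [r _]. apply r.
        -- exfalso; eapply ea; eauto.
        -- exfalso; eapply eb; eauto.
      * apply einj in ha. apply einj in hb. subst; auto.
Qed.
Theorem corollary2p3 :
  (forall (T : Type) (le : T -> T -> Prop), is_poset le ->
     forall x : T, (exists y, lt_of le y x) ->
     forall g : T -> upset le x, strictly_isotone le (upset_le le x) g ->
     ~ exists f : ideal le -> T, strictly_isotone (ideal_le le) le f)
  /\
  (forall X : Type, infinite X ->
     ~ exists f : ideal (subset_le X) -> (X -> Prop),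
         strictly_isotone (ideal_le (subset_le X)) (subset_le X) f)
  /\
  (forall X : Type, infinite X ->
     ~ exists f : ideal (eqrel_le X) -> eqrel X,
         strictly_isotone (ideal_le (eqrel_le X)) (eqrel_le X) f).
Proof.
  split; [exact part1|split; [exact part2|exact part3]].
Qed.
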